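(* For $\alpha\in\mathbb{R}\setminus\{0\}$ consider the two-stage explicit Runge--Kutta method with $$A=\begin{pmatrix}0&0\\ \alpha&0\end{pmatrix},\qquad b^\top=\Big(1-\tfrac{1}{2\alpha},\ \tfrac{1}{2\alpha}\Big).$$ Its positivity step-size coefficient is $$\gamma_\alpha=\begin{cases}0,&0\ne\alpha<\tfrac12,\\ 1,&\tfrac12\le\alpha\le1,\\ \tfrac1\alpha,&\alpha>1.\end{cases}$$
   Context: For this method, the positivity polynomials (in the variables $\xi^1_{k-1},\xi^1_k,\xi^2_k$) are $P_0=1-(1-\frac1{2\alpha})\xi^1_k-\frac1{2\alpha}\xi^2_k+\frac12\xi^1_k\xi^2_k$, $P_1=(1-\frac1{2\alpha})\xi^1_k+\frac1{2\alpha}\xi^2_k-\frac12\xi^1_{k-1}\xi^2_k-\frac12\xi^1_k\xi^2_k$, $P_2=\frac12\xi^1_{k-1}\xi^2_k$. These arise as follows: applying the method to $u_k'=q_k(u,t)(u_{k-1}-u_k)/\Delta x$ gives $y^1=u^n$, $y^2_k=u^n_k+\alpha\xi^1_k(y^1_{k-1}-y^1_k)$, $u^{n+1}_k=u^n_k+b_1\xi^1_k(y^1_{k-1}-y^1_k)+b_2\xi^2_k(y^2_{k-1}-y^2_k)$ with $\xi^j_k=\frac{\Delta t}{\Delta x}q_k(y^j,t_n+c_j\Delta t)$, and $u^{n+1}_k=P_0u^n_k+P_1u^n_{k-1}+P_2u^n_{k-2}$. The step-size coefficient is $\gamma_\alpha=\sup\{\delta\ge0:P_0,P_1,P_2\ge0\text{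 on }[0,\delta]^3\}$ (or $0$ if the set is empty). *)

(* Defs.v *)
From Stdlib Require Import Reals.
From Coquelicot Require Import Coquelicot.
Open Scope R_scope.

(* Positivity polynomials; variables: xm = xi^1_{k-1}, x1 = xi^1_k, x2 = xi^2_k. *)
Definition P0 (alpha xm x1 x2 : R) : R :=
  1 - (1 - 1 / (2 * alpha)) * x1 - 1 / (2 * alpha) * x2 + 1 / 2 * x1 * x2.
Definition P1 (alpha xm x1 x2 : R) : R :=
  (1 - 1 / (2 * alpha)) * x1 + 1 / (2 * alpha) * x2
  - 1 / 2 * xm * x2 - 1 / 2 * x1 * x2.
Definition P2 (alpha xm x1 x2 : R) : R := 1 / 2 * xm * x2.

Definition admissible (alpha delta : R) : Prop :=
  0 <= delta /\
  forall xm x1 x2 : R,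
    0 <= xm <= delta -> 0 <= x1 <= delta -> 0 <= x2 <= delta ->
    0 <= P0 alpha xm x1 x2 /\ 0 <= P1 alpha xm x1 x2 /\ 0 <= P2 alpha xm x1 x2.

(* Step-size coefficient: supremum in the extended reals (Lub_Rbar gives
   p_infty if unbounded, m_infty if empty; the paper's "0 if empty"
   convention is moot since delta = 0 is always admissible). *)
Definition gamma (alpha : R) : Rbar := Lub_Rbar (admissible alpha).

(* Main.v *)
Require Import Defs.
From Stdlib Require Import Reals Lra Psatz.
From Coquelicot Require Import Coquelicot.
Open Scope R_scope.

Lemma bilin (d x y c0 c1 c2 c3 : R) : 0 < d -> 0 <= x <= d -> 0 <= y <= d ->
  0 <= c0 -> 0 <= c0 + c1 * d -> 0 <= c0 + c2 * d ->
  0 <= c0 + c1 * d + c2 * d + c3 * d * d ->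
  0 <= c0 + c1 * x + c2 * y + c3 * x * y.
Proof.
  intros Hd Hx Hy H0 H1 H2 H3.
  assert (E : d * d * (c0 + c1 * x + c2 * y + c3 * x * y) =
    c0 * ((d - x) * (d - y)) + (c0 + c1 * d) * (x * (d - y))
    + (c0 + c2 * d) * ((d - x) * y) + (c0 + c1 * d + c2 * d + c3 * d * d) * (x * y))
    by ring.
  assert (A1 : 0 <= (d - x) * (d - y)) by (apply Rmult_le_pos; lra).
  assert (A2 : 0 <= x * (d - y)) by (apply Rmult_le_pos; lra).
  assert (A3 : 0 <= (d - x) * y) by (apply Rmult_le_pos; lra).
  assert (A4 : 0 <= x * y) by (apply Rmult_le_pos; lra).
  assert (B : 0 <= d * d * (c0 + c1 * x + c2 * y + c3 * x * y)).
  { rewrite E. repeat apply Rplus_le_le_0_compat; apply Rmult_le_pos; lra. }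
  assert (Hdd : 0 < d * d) by nra.
  destruct (Rle_or_lt 0 (c0 + c1 * x + c2 * y + c3 * x * y)) as [h|h]; auto.
  exfalso. assert (d * d * (c0 + c1 * x + c2 * y + c3 * x * y) < 0).
  { nra. }
  lra.
Qed.

Lemma adm0 a : admissible a 0.
Proof.
  split; [lra|]. intros xm x1 x2 Hm H1 H2.
  assert (xm = 0) by lra. assert (x1 = 0) by lra. assert (x2 = 0) by lra. subst.
  unfold P0, P1, P2. split; [|split]; ring_simplify; lra.
Qed.

Lemma adm_crit a d : let b := 1 / (2 * a) in 0 < d ->
  0 <= 1 - (1 - b) * d -> 0 <= 1 - b * d ->
  0 <= (1 - b) * d -> 0 <= b * d - d * d / 2 -> 0 <= d - d * d ->
  admissible a d.
Proof.
  intros b Hd C1 C2 C3 C4 C5. split; [lra|].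
  intros xm x1 x2 Hm H1 H2. unfold P0, P1, P2. fold b.
  split; [|split].
  - pose proof (bilin d x1 x2 1 (-(1-b)) (-b) (1/2) Hd H1 H2).
    replace (1 - (1 - b) * x1 - b * x2 + 1 / 2 * x1 * x2) with
      (1 + - (1 - b) * x1 + - b * x2 + 1 / 2 * x1 * x2) by ring.
    apply H; try lra. nra.
  - pose proof (bilin d x1 x2 0 (1-b) (b - d/2) (-1/2) Hd H1 H2).
    assert (0 <= (d - xm) * x2) by (apply Rmult_le_pos; lra).
    assert (0 <= 0 + (1 - b) * x1 + (b - d / 2) * x2 + -1 / 2 * x1 * x2).
    { apply H; try lra. }
    nra.
  - assert (0 <= xm * x2) by (apply Rmult_le_pos; lra). lra.
Qed.

Lemma lub_eq a s : admissible a s -> (forall d, admissible a d -> d <= s) ->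
  gamma a = Finite s.
Proof.
  intros Hs Hub. unfold gamma. apply is_lub_Rbar_unique. split.
  - intros x Hx. simpl. now apply Hub.
  - intros b Hb. apply Hb. exact Hs.
Qed.

Theorem proposition2 (alpha : R) (Hne : alpha <> 0) :
  (alpha < 1 / 2 -> gamma alpha = Finite 0) /\
  (1 / 2 <= alpha <= 1 -> gamma alpha = Finite 1) /\
  (1 < alpha -> gamma alpha = Finite (1 / alpha)).
Proof.
  set (b := 1 / (2 * alpha)).
  split; [|split].
  - intros Ha. apply lub_eq; [apply adm0|].
    intros d [Hd0 Hd]. destruct (Rle_or_lt d 0) as [h|h]; [exact h|exfalso].
    destruct (Rlt_or_le alpha 0) as [Hn|Hp].
    + assert (Hb : b < 0).
      { unfold b. unfold Rdiv. rewrite Rmult_1_l. apply Rinv_lt_0_compat. lra. }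
      destruct (Hd 0 0 d) as [_ [H1 _]]; try lra.
      unfold P1 in H1. fold b in H1. nra.
    + assert (Hb : b > 1).
      { unfold b. assert (0 < 2 * alpha < 1) by lra.
        apply (Rmult_lt_reg_r (2*alpha)); [lra|]. unfold Rdiv. field_simplify; lra. }
      destruct (Hd 0 d 0) as [_ [H1 _]]; try lra.
      unfold P1 in H1. fold b in H1. nra.
  - intros Ha.
    assert (Hb : b * (2 * alpha) = 1) by (unfold b; field; lra).
    assert (1/2 <= b <= 1) by nra.
    apply lub_eq.
    + apply adm_crit; fold b; nra.
    + intros d [Hd0 Hd]. destruct (Rle_or_lt d 1) as [h|h]; [exact h|exfalso].
      destruct (Hd d d d) as [_ [H1 _]]; try lra.
      unfold P1 in H1. fold b in H1. nra.
  - intros Ha.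
    assert (Hb : b * (2 * alpha) = 1) by (unfold b; field; lra).
    assert (E : 1 / alpha = 2 * b) by (unfold b; field; lra).
    assert (0 < b < 1/2) by nra.
    rewrite E. apply lub_eq.
    + apply adm_crit; fold b; nra.
    + intros d [Hd0 Hd]. destruct (Rle_or_lt d (2*b)) as [h|h]; [exact h|exfalso].
      destruct (Hd d 0 d) as [_ [H1 _]]; try lra.
      unfold P1 in H1. fold b in H1. nra.
Qed.
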